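(* Let $\sigma:\mathbb{R}\to\mathbb{R}$ be an increasing odd homeomorphism and let $U_\sigma=F_\sigma\circ F_\sigma$. If $p\in\Omega$ is $\sigma$-irrational, then $\|U_\sigma^n(p)\|\leq 2^{-n}\|p\|$ for every $n\geq0$, where $\|(x,y)\|=|x|+|y|$.
   Context: $h_\sigma(x,y)=(x+\sigma^{-1}(y),y)$, $v_\sigma(x,y)=(x,\sigma(x)+y)$, $\Omega=\mathbb{R}^2\setminus\{(0,0)\}$, $X=\{(x,y)\in\Omega:xy\geq0,\ x\neq0\}$, $Y=\{(x,y)\in\Omega:xy\leq0,\ y\neq0\}$, $A=h_\sigma(X)$, $B=v_\sigma(X)$, $C=h_\sigma^{-1}(Y)$, $D=v_\sigma^{-1}(Y)$. The accelerated Euclidean algorithm $F_\sigma$ is defined as follows: if $p\in A$, $F_\sigma(p)=h_\sigma^{-n}(p)$ with $n$ the smallest integer such that $h_\sigma^{-n}(p)\in B$; if $p\in B$, $F_\sigma(p)=v_\sigma^{-n}(p)$ with $n$ the smallest integer such that $v_\sigma^{-n}(p)\in A$; on $Y$ by the analogous formulas (if $p\in C$, $F_\sigma(p)=h_\sigma^{n}(p)$ with $n$ smallest such that $h_\sigma^n(p)\in D$; if $p\in D$, $F_\sigma(p)=v_\sigma^{n}(p)$ with $n$ smallest such that $v_\sigma^n(p)\in C$). The $\sigma$-rational lines are the axes $Ox,Oy$, the sets $m(Ox)$ with $m$ in the monoid generated by $h_\sigma,v_\sigma$, and the sets $m(Oy)$ with $m$ in the monoid generated by $h_\sigma^{-1},v_\sigma^{-1}$;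 a point is $\sigma$-irrational if it lies on none of them. *)

(* Defs.v *)
From Stdlib Require Import Reals Lra ClassicalEpsilon List.
Open Scope R_scope.

Definition pt := (R * R)%type.

Section Dyn.
Variables (sigma sigmainv : R -> R).

Definition hmap (p : pt) : pt := (fst p + sigmainv (snd p), snd p).
Definition hinv (p : pt) : pt := (fst p - sigmainv (snd p), snd p).
Definition vmap (p : pt) : pt := (fst p, sigma (fst p) + snd p).
Definition vinv (p : pt) : pt := (fst p, snd p - sigma (fst p)).

Definition Omega (p : pt) : Prop := p <> (0, 0).
Definition Xset (p : pt) : Prop := Omega p /\ fst p * snd p >= 0 /\ fst p <> 0.
Definition Yset (p : pt) : Prop := Omega p /\ fst p * snd p <= 0 /\ snd p <> 0.

Definition img (f : pt -> pt) (S : pt -> Prop) (p : pt) : Prop :=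
  exists q, S q /\ p = f q.

Definition Aset := img hmap Xset.
Definition Bset := img vmap Xset.
Definition Cset := img hinv Yset.
Definition Dset := img vinv Yset.

Definition first_hit (f : pt -> pt) (P : pt -> Prop) (p : pt) (n : nat) : Prop :=
  P (Nat.iter n f p) /\ forall m, (m < n)%nat -> ~ P (Nat.iter m f p).

(* f^n(p) for that smallest n (an unspecified point if no such n exists) *)
Definition iterate_until (f : pt -> pt) (P : pt -> Prop) (p : pt) : pt :=
  epsilon (inhabits p) (fun q => exists n, first_hit f P p n /\ q = Nat.iter n f p).

(* the accelerated Euclidean algorithm F_sigma (A,B,C,D are pairwise disjoint);
   outside A u B u C u D it is left unspecified (identity) *)
Definition Fsigma (p : pt) : pt :=
  if excluded_middle_informative (Aset p) then iterate_until hinv Bset p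
  else if excluded_middle_informative (Bset p) then iterate_until vinv Aset p
  else if excluded_middle_informative (Cset p) then iterate_until hmap Dset p
  else if excluded_middle_informative (Dset p) then iterate_until vmap Cset p
  else p.

Definition Usigma (p : pt) : pt := Fsigma (Fsigma p).

Definition Ox (p : pt) : Prop := snd p = 0.
Definition Oy (p : pt) : Prop := fst p = 0.

(* an element of the monoid generated by f and g: a finite composition (word) *)
Definition apply_word (f g : pt -> pt) (w : list bool) (p : pt) : pt :=
  fold_right (fun (b : bool) (q : pt) => if b then f q else g q) p w.

Definition sigma_rational (p : pt) : Prop :=
  Ox p \/ Oy p \/
  (exists w, img (apply_word hmap vmap w) Ox p) \/
  (exists w, img (apply_word hinv vinv w) Oy p).

Definition sigma_irrational (p : pt) : Prop := ~ sigma_rational p.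

End Dyn.

Definition norm1 (p : pt) : R := Rabs (fst p) + Rabs (snd p).

Definition inc_odd_homeo (sigma sigmainv : R -> R) : Prop :=
  (forall x y, x < y -> sigma x < sigma y) /\
  (forall x, sigma (- x) = - sigma x) /\
  (forall x, sigmainv (sigma x) = x) /\
  (forall y, sigma (sigmainv y) = y) /\
  continuity sigma /\ continuity sigmainv.

(* Main.v *)
Require Import Defs.
From Stdlib Require Import Reals Lra Lia List ClassicalEpsilon Classical.
Open Scope R_scope.

Section P.
Variables (sg sgi : R -> R).
Hypothesis Hmono : forall x y, x < y -> sg x < sg y.
Hypothesis Hodd : forall x, sg (-x) = - sg x.
Hypothesis Hli : forall x, sgi (sg x) = x.
Hypothesis Hri : forall y, sg (sgi y) = y.

Lemma sg0 : sg 0 = 0.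
Proof. pose proof (Hodd 0) as H. rewrite Ropp_0 in H. lra. Qed.

Lemma L1 z a b : z*(sg a - sg b) >= 0 <-> z*(a-b) >= 0.
Proof.
  destruct (total_order_T a b) as [[h|h]|h].
  - pose proof (Hmono a b h). split; intro; nra.
  - subst. split; intro; nra.
  - pose proof (Hmono b a h). split; intro; nra.
Qed.

Lemma L1le z a b : z*(sg a - sg b) <= 0 <-> z*(a-b) <= 0.
Proof.
  pose proof (L1 (-z) a b). split; intro; nra.
Qed.

Lemma Lneq a b : sg a <> sg b <-> a <> b.
Proof.
  split; intros H E.
  - subst; auto.
  - apply H. rewrite <- (Hli a), <- (Hli b), E. reflexivity.
Qed.

Lemma img_inv (f g : pt -> pt) (S : pt -> Prop) :
  (forall q, g (f q) = q) -> (forall p, f (g p) = p) -> forall p, img f S p <-> S (g p).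
Proof.
  intros H1 H2 p; split.
  - intros [q [Sq ->]]. rewrite H1; auto.
  - intros H. exists (g p); split; auto.
Qed.

Lemma Xset_iff a b : Xset (a,b) <-> a*b >= 0 /\ a <> 0.
Proof.
  unfold Xset, Omega; simpl; split; [tauto|].
  intros [h1 h2]; repeat split; auto. intro E; inversion E; auto.
Qed.

Lemma Yset_iff a b : Yset (a,b) <-> a*b <= 0 /\ b <> 0.
Proof.
  unfold Yset, Omega; simpl; split; [tauto|].
  intros [h1 h2]; repeat split; auto. intro E; inversion E; auto.
Qed.

Lemma A_raw x y : Aset sgi (x,y) <-> Xset (x - sgi y, y).
Proof.
  unfold Aset. apply (img_inv _ (hinv sgi)); intros [a b]; unfold hinv, hmap; simpl; f_equal; ring.
Qed.
Lemma B_raw x y : Bset sg (x,y) <-> Xset (x, y - sg x).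
Proof.
  unfold Bset. apply (img_inv _ (vinv sg)); intros [a b]; unfold vinv, vmap; simpl; f_equal; ring.
Qed.
Lemma C_raw x y : Cset sgi (x,y) <-> Yset (x + sgi y, y).
Proof.
  unfold Cset. apply (img_inv _ (hmap sgi)); intros [a b]; unfold hinv, hmap; simpl; f_equal; ring.
Qed.
Lemma D_raw x y : Dset sg (x,y) <-> Yset (x, sg x + y).
Proof.
  unfold Dset. apply (img_inv _ (vmap sg)); intros [a b]; unfold vinv, vmap; simpl; f_equal; ring.
Qed.

Lemma sgi_sign y : sgi y * y >= 0 /\ (sgi y = 0 <-> y = 0).
Proof.
  set (s := sgi y). assert (Hy : y = sg s - sg 0) by (unfold s; rewrite Hri, sg0; ring).
  split.
  - rewrite Hy. apply L1. nra.
  - split; intro E.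
    + rewrite Hy, E; ring.
    + unfold s; rewrite E. transitivity (sgi (sg 0)); [rewrite sg0; reflexivity | apply Hli].
Qed.

Lemma A_s x y : Aset sgi (x,y) <-> (x - sgi y) * sgi y >= 0 /\ x <> sgi y.
Proof.
  rewrite A_raw, Xset_iff.
  set (s := sgi y). assert (Hy : y = sg s - sg 0) by (unfold s; rewrite Hri, sg0; ring).
  rewrite Hy at 1. rewrite L1. split; intros [h1 h2]; split; try lra.
Qed.

Lemma B_s x y : Bset sg (x,y) <-> x * (sgi y - x) >= 0 /\ x <> 0.
Proof.
  rewrite B_raw, Xset_iff.
  set (s := sgi y). assert (Hy : y = sg s) by (unfold s; rewrite Hri; ring).
  rewrite Hy. rewrite L1. tauto.
Qed.

Lemma C_s x y : Cset sgi (x,y) <-> (x + sgi y) * sgi y <= 0 /\ sgi y <> 0.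
Proof.
  rewrite C_raw, Yset_iff.
  set (s := sgi y). assert (Hy : y = sg s - sg 0) by (unfold s; rewrite Hri, sg0; ring).
  rewrite Hy at 1. rewrite L1le. 
  assert (y <> 0 <-> s <> 0) by (pose proof (sgi_sign y); unfold s; tauto).
  split; intros [h1 h2]; split; try tauto; lra.
Qed.

Lemma D_s x y : Dset sg (x,y) <-> x * (x + sgi y) <= 0 /\ x <> - sgi y.
Proof.
  rewrite D_raw, Yset_iff.
  set (s := sgi y). assert (Hy : sg x + y = sg x - sg (-s)) by (unfold s; rewrite Hodd, Hri; ring).
  rewrite Hy. rewrite L1le.
  assert (sg x - sg (- s) <> 0 <-> x <> -s).
  { rewrite <- (Lneq x (-s)). split; intros h E; apply h; lra. }
  split; intros [h1 h2]; split; try tauto; lra.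
Qed.

Lemma sgneq0 x : x <> 0 <-> sg x <> 0.
Proof. pose proof (Lneq x 0) as H. rewrite sg0 in H. tauto. Qed.

Lemma B_t x y : Bset sg (x,y) <-> (y - sg x) * sg x >= 0 /\ sg x <> 0.
Proof.
  rewrite B_raw, Xset_iff.
  assert (E1: x*(y - sg x) >= 0 <-> (y - sg x)*sg x >= 0).
  { pose proof (L1 (y - sg x) x 0) as H. rewrite sg0 in H.
    replace ((y - sg x)*(sg x - 0)) with ((y - sg x)*sg x) in H by ring.
    replace ((y - sg x)*(x - 0)) with (x*(y - sg x)) in H by ring. tauto. }
  rewrite E1, sgneq0. tauto.
Qed.

Lemma A_t x y : Aset sgi (x,y) <-> y * (sg x - y) >= 0 /\ sg x <> y.
Proof.
  rewrite A_raw, Xset_iff.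
  set (u := sgi y). assert (Hy : y = sg u) by (unfold u; rewrite Hri; ring).
  assert (E1: (x - u) * y >= 0 <-> y * (sg x - y) >= 0).
  { pose proof (L1 y x u) as H. rewrite <- Hy in H.
    replace (y * (x - u)) with ((x-u)*y) in H by ring. tauto. }
  assert (E2: x - u <> 0 <-> sg x <> y).
  { rewrite Hy, Lneq. split; intros h E; apply h; lra. }
  rewrite E1, E2. tauto.
Qed.

Lemma D_t x y : Dset sg (x,y) <-> (sg x + y) * sg x <= 0 /\ sg x + y <> 0.
Proof.
  rewrite D_raw, Yset_iff.
  assert (E1: x*(sg x + y) <= 0 <-> (sg x + y)*sg x <= 0).
  { pose proof (L1le (sg x + y) x 0) as H. rewrite sg0 in H.
    replace ((sg x + y)*(sg x - 0)) with ((sg x + y)*sg x) in H by ring.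
    replace ((sg x + y)*(x - 0)) with (x*(sg x + y)) in H by ring. tauto. }
  rewrite E1. tauto.
Qed.

Lemma C_t x y : Cset sgi (x,y) <-> y * (sg x + y) <= 0 /\ y <> 0.
Proof.
  rewrite C_raw, Yset_iff.
  set (u := sgi y). assert (Hy : sg x + y = sg x - sg (-u)) by (unfold u; rewrite Hodd, Hri; ring).
  assert (E1: (x + u) * y <= 0 <-> y * (sg x + y) <= 0).
  { pose proof (L1le y x (-u)) as H. rewrite <- Hy in H.
    replace (y * (x - - u)) with ((x+u)*y) in H by ring. tauto. }
  rewrite E1. tauto.
Qed.


Lemma iter_hinv n x y : Nat.iter n (hinv sgi) (x,y) = (x - INR n * sgi y, y).
Proof.
  induction n. - simpl; f_equal; ring.
  - rewrite Nat.iter_succ, IHn, S_INR. unfold hinv; simpl. f_equal; ring.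
Qed.
Lemma iter_hmap n x y : Nat.iter n (hmap sgi) (x,y) = (x + INR n * sgi y, y).
Proof.
  induction n. - simpl; f_equal; ring.
  - rewrite Nat.iter_succ, IHn, S_INR. unfold hmap; simpl. f_equal; ring.
Qed.
Lemma iter_vinv n x y : Nat.iter n (vinv sg) (x,y) = (x, y - INR n * sg x).
Proof.
  induction n. - simpl; f_equal; ring.
  - rewrite Nat.iter_succ, IHn, S_INR. unfold vinv; simpl. f_equal; ring.
Qed.
Lemma iter_vmap n x y : Nat.iter n (vmap sg) (x,y) = (x, y + INR n * sg x).
Proof.
  induction n. - simpl; f_equal; ring.
  - rewrite Nat.iter_succ, IHn, S_INR. unfold vmap; simpl. f_equal; ring.
Qed.

Lemma least (Q : nat -> Prop) : (exists n, Q n) -> exists n, Q n /\ forall m, (m < n)%nat -> ~ Q m.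
Proof.
  intros [n Hn].
  assert (forall N, forall n, (n <= N)%nat -> Q n -> exists n, Q n /\ forall m, (m < n)%nat -> ~ Q m).
  { induction N; intros k Hk Qk.
    - exists k; split; auto. intros m Hm; lia.
    - destruct (classic (exists m, (m < k)%nat /\ Q m)) as [[m [Hm Qm]]|H].
      + apply (IHN m); auto; lia.
      + exists k; split; auto. intros m Hm Qm; apply H; eauto. }
  eauto.
Qed.

Lemma iu_spec f P p : (exists n, P (Nat.iter n f p)) ->
  exists n, first_hit f P p n /\ iterate_until f P p = Nat.iter n f p.
Proof.
  intros H. apply least in H. destruct H as [n0 [H1 H2]].
  unfold iterate_until.
  destruct (epsilon_spec (inhabits p) (fun q => exists n, first_hit f P p n /\ q = Nat.iter n f p))
    as [k [Hk E]].
  - exists (Nat.iter n0 f p), n0; split; auto. split; auto.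
  - exists k; split; auto.
Qed.

Lemma E1p s : s > 0 -> forall N z, 0 < z <= INR N * s + s -> exists n, 0 < z - INR n * s <= s.
Proof.
  intros Hs N; induction N; intros z Hz.
  - exists 0%nat. simpl in *. lra.
  - destruct (Rle_dec z s) as [r|r].
    + exists 0%nat. simpl. lra.
    + destruct (IHN (z - s)) as [n Hn].
      * rewrite S_INR in Hz. lra.
      * exists (S n). rewrite S_INR. lra.
Qed.

Lemma E2p s : s > 0 -> forall N z, 0 <= z < INR N * s + s -> exists n, 0 <= z - INR n * s < s.
Proof.
  intros Hs N; induction N; intros z Hz.
  - exists 0%nat. simpl in *. lra.
  - destruct (Rlt_dec z s) as [r|r].
    + exists 0%nat. simpl. lra.
    + destruct (IHN (z - s)) as [n Hn].
      * rewrite S_INR in Hz. lra.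
      * exists (S n). rewrite S_INR. lra.
Qed.

Lemma E1 s z : s <> 0 -> z * s > 0 ->
  exists n, (z - INR n * s) * (s - (z - INR n * s)) >= 0 /\ z - INR n * s <> 0.
Proof.
  intros Hs Hz.
  destruct (Rtotal_order s 0) as [h|[h|h]]; [|lra|].
  - assert (z < 0) by (destruct (Rle_or_lt 0 z); [nra|lra]).
    destruct (INR_archimed (-s) (-z)) as [N HN]; [lra|].
    destruct (E1p (-s) ltac:(lra) N (-z)) as [n Hn]. lra.
    exists n. split. nra. lra.
  - assert (z > 0) by (destruct (Rle_or_lt z 0); [nra|lra]).
    destruct (INR_archimed s z) as [N HN]; [lra|].
    destruct (E1p s ltac:(lra) N z) as [n Hn]. lra.
    exists n. split. nra. lra.
Qed.

Lemma E2 s z : s <> 0 -> z * s >= 0 ->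
  exists n, (z - INR n * s) * (s - (z - INR n * s)) >= 0 /\ z - INR n * s <> s.
Proof.
  intros Hs Hz.
  destruct (Rtotal_order s 0) as [h|[h|h]]; [|lra|].
  - assert (z <= 0) by (destruct (Rle_or_lt z 0); [lra|nra]).
    destruct (INR_archimed (-s) (-z)) as [N HN]; [lra|].
    destruct (E2p (-s) ltac:(lra) N (-z)) as [n Hn]. lra.
    exists n. split. nra. lra.
  - assert (z >= 0) by (destruct (Rle_or_lt 0 z); [lra|nra]).
    destruct (INR_archimed s z) as [N HN]; [lra|].
    destruct (E2p s ltac:(lra) N z) as [n Hn]. lra.
    exists n. split. nra. lra.
Qed.

Lemma Bnd1 s z n : s <> 0 -> (z - s) * s >= 0 -> (1 <= INR n) ->
  (z - INR n * s) * (s - (z - INR n * s)) >= 0 -> Rabs (z - INR n * s) <= Rabs z / 2.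
Proof.
  intros Hs Hz Hn Hw.
  destruct (Rtotal_order s 0) as [h|[h|h]]; [|lra|].
  - assert (INR n * s <= s) by nra.
    assert (z <= s) by nra. 
    assert (z - INR n * s <= 0) by nra.
    rewrite !Rabs_left1 by lra. nra.
  - assert (INR n * s >= s) by nra.
    assert (z >= s) by nra.
    assert (z - INR n * s >= 0) by nra.
    rewrite !Rabs_right by lra. nra.
Qed.


Ltac sforms := repeat (match goal with
  | H : Aset _ (_,_) |- _ => rewrite A_s in H
  | H : Bset _ (_,_) |- _ => rewrite B_s in H
  | H : Cset _ (_,_) |- _ => rewrite C_s in H
  | H : Dset _ (_,_) |- _ => rewrite D_s in H end).

Lemma notAB x y : Aset sgi (x,y) -> ~ Bset sg (x,y).
Proof. intros h1 h2; sforms. set (s := sgi y) in *. destruct h1, h2. nra. Qed.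
Lemma notAC x y : Aset sgi (x,y) -> ~ Cset sgi (x,y).
Proof. intros h1 h2; sforms. set (s := sgi y) in *. destruct h1, h2. nra. Qed.
Lemma notAD x y : Aset sgi (x,y) -> ~ Dset sg (x,y).
Proof. intros h1 h2; sforms. set (s := sgi y) in *. destruct h1, h2.
  destruct (Rtotal_order s 0) as [h|[h|h]]; nra. Qed.
Lemma notBC x y : Bset sg (x,y) -> ~ Cset sgi (x,y).
Proof. intros h1 h2; sforms. set (s := sgi y) in *. destruct h1, h2.
  destruct (Rtotal_order s 0) as [h|[h|h]]; nra. Qed.
Lemma notBD x y : Bset sg (x,y) -> ~ Dset sg (x,y).
Proof. intros h1 h2; sforms. set (s := sgi y) in *. destruct h1, h2. nra. Qed.
Lemma notCD x y : Cset sgi (x,y) -> ~ Dset sg (x,y).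
Proof. intros h1 h2; sforms. set (s := sgi y) in *. destruct h1, h2.
  destruct (Rtotal_order s 0) as [h|[h|h]]; nra. Qed.

Lemma cover x y : Omega (x,y) -> Aset sgi (x,y) \/ Bset sg (x,y) \/ Cset sgi (x,y) \/ Dset sg (x,y).
Proof.
  intros Hom. rewrite A_s, B_s, C_s, D_s.
  pose proof (sgi_sign y) as [Hs1 Hs2]. set (s := sgi y) in *.
  assert (Hne : x <> 0 \/ y <> 0).
  { destruct (Req_dec x 0); [|auto]. destruct (Req_dec y 0); [|auto]. subst. exfalso; apply Hom; auto. }
  destruct (Rtotal_order x 0) as [hx|[hx|hx]]; destruct (Rtotal_order y 0) as [hy|[hy|hy]].
  - assert (s < 0) by (destruct (Rtotal_order s 0) as [h|[h|h]]; [lra| assert (y = 0) by tauto; lra | nra]).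
    destruct (Rle_lt_dec s x); [right; left; split; nra| left; split; nra].
  - assert (s = 0) by tauto. destruct (Rle_lt_dec s x); [right; left; split; nra| left; split; nra].
  - assert (s > 0) by (destruct (Rtotal_order s 0) as [h|[h|h]]; [nra| assert (y = 0) by tauto; lra | lra]).
    destruct (Rle_lt_dec (x + s) 0); [right; right; left; split; nra| right; right; right; split; nra].
  - assert (s < 0) by (destruct (Rtotal_order s 0) as [h|[h|h]]; [lra| assert (y = 0) by tauto; lra | nra]).
    destruct (Rle_lt_dec 0 (x + s)); [right; right; left; split; nra| right; right; right; split; nra].
  - exfalso; destruct Hne; auto.
  - assert (s > 0) by (destruct (Rtotal_order s 0) as [h|[h|h]]; [nra| assert (y = 0) by tauto; lra | lra]).
    destruct (Rle_lt_dec (x + s) 0); [right; right; left; split; nra| right; right; right; split; nra].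
  - assert (s < 0) by (destruct (Rtotal_order s 0) as [h|[h|h]]; [lra| assert (y = 0) by tauto; lra | nra]).
    destruct (Rle_lt_dec 0 (x + s)); [right; right; left; split; nra| right; right; right; split; nra].
  - assert (s = 0) by tauto. destruct (Rle_lt_dec x s); [right; left; split; nra| left; split; nra].
  - assert (s > 0) by (destruct (Rtotal_order s 0) as [h|[h|h]]; [nra| assert (y = 0) by tauto; lra | lra]).
    destruct (Rle_lt_dec x s); [right; left; split; nra| left; split; nra].
Qed.


Lemma INR_ge1 n : (1 <= INR (S n)).
Proof. rewrite S_INR. pose proof (pos_INR n). lra. Qed.

Lemma stepA x y : Aset sgi (x,y) -> y <> 0 ->
  exists n, Fsigma sg sgi (x,y) = Nat.iter n (hinv sgi) (x,y) /\
    Bset sg (x - INR n * sgi y, y) /\ Rabs (x - INR n * sgi y) <= Rabs x / 2.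
Proof.
  intros HA Hy. unfold Fsigma.
  destruct (excluded_middle_informative (Aset sgi (x,y))) as [_|c]; [|contradiction].
  pose proof HA as HA'. rewrite A_s in HA'.
  pose proof (sgi_sign y) as [Hs1 Hs2].
  assert (Hs : sgi y <> 0) by tauto.
  destruct (iu_spec (hinv sgi) (Bset sg) (x,y)) as [n [[HB Hmin] E]].
  { destruct (E1 (sgi y) x) as [n Hn]; auto. destruct HA'; nra.
    exists n. rewrite iter_hinv, B_s. exact Hn. }
  exists n. rewrite iter_hinv in HB. split; [exact E|]. split; [exact HB|].
  destruct n as [|n].
  - exfalso. simpl in HB. apply (notAB x y); auto. replace x with (x - 0 * sgi y) by ring. auto.
  - rewrite B_s in HB. apply Bnd1; auto. apply HA'. apply INR_ge1. apply HB.
Qed.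

Lemma stepB x y : Bset sg (x,y) ->
  exists n, Fsigma sg sgi (x,y) = Nat.iter n (vinv sg) (x,y) /\
    Aset sgi (x, y - INR n * sg x) /\ Rabs (y - INR n * sg x) <= Rabs y / 2.
Proof.
  intros HB. unfold Fsigma.
  destruct (excluded_middle_informative (Aset sgi (x,y))) as [c|_].
  { exfalso; apply (notAB x y); auto. }
  destruct (excluded_middle_informative (Bset sg (x,y))) as [_|c]; [|contradiction].
  pose proof HB as HB'. rewrite B_t in HB'.
  set (t := sg x) in *.
  destruct (iu_spec (vinv sg) (Aset sgi) (x,y)) as [n [[HA Hmin] E]].
  { destruct (E2 t y) as [n Hn]; try tauto. destruct HB'; nra.
    exists n. rewrite iter_vinv, A_t. fold t. destruct Hn; split; auto. }
  exists n. rewrite iter_vinv in HA. split; [exact E|]. split; [exact HA|].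
  destruct n as [|n].
  - exfalso. simpl in HA. apply (notAB x y); auto. replace y with (y - 0 * t) by ring. auto.
  - rewrite A_t in HA. fold t in HA. apply Bnd1. tauto. apply HB'. apply INR_ge1.
    destruct HA. nra.
Qed.

Lemma stepC x y : Cset sgi (x,y) ->
  exists n, Fsigma sg sgi (x,y) = Nat.iter n (hmap sgi) (x,y) /\
    Dset sg (x + INR n * sgi y, y) /\ Rabs (x + INR n * sgi y) <= Rabs x / 2.
Proof.
  intros HC. unfold Fsigma.
  destruct (excluded_middle_informative (Aset sgi (x,y))) as [c|_].
  { exfalso; apply (notAC x y); auto. }
  destruct (excluded_middle_informative (Bset sg (x,y))) as [c|_].
  { exfalso; apply (notBC x y); auto. }
  destruct (excluded_middle_informative (Cset sgi (x,y))) as [_|c]; [|contradiction].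
  pose proof HC as HC'. rewrite C_s in HC'.
  set (s := sgi y) in *.
  destruct (iu_spec (hmap sgi) (Dset sg) (x,y)) as [n [[HD Hmin] E]].
  { destruct (E2 s (-x)) as [n Hn]; try tauto. destruct HC'; nra.
    exists n. rewrite iter_hmap, D_s. fold s. destruct Hn; split; [nra|lra]. }
  exists n. rewrite iter_hmap in HD. split; [exact E|]. split; [exact HD|].
  destruct n as [|n].
  - exfalso. simpl in HD. apply (notCD x y); auto. replace x with (x + 0 * s) by ring. auto.
  - rewrite D_s in HD. fold s in HD.
    replace (x + INR (S n) * s) with (- (-x - INR (S n) * s)) by ring.
    rewrite Rabs_Ropp. rewrite <- (Rabs_Ropp x).
    apply Bnd1. tauto. destruct HC'; nra. apply INR_ge1.
    destruct HD. nra.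
Qed.

Lemma stepD x y : Dset sg (x,y) -> x <> 0 ->
  exists n, Fsigma sg sgi (x,y) = Nat.iter n (vmap sg) (x,y) /\
    Cset sgi (x, y + INR n * sg x) /\ Rabs (y + INR n * sg x) <= Rabs y / 2.
Proof.
  intros HD Hx. unfold Fsigma.
  destruct (excluded_middle_informative (Aset sgi (x,y))) as [c|_].
  { exfalso; apply (notAD x y); auto. }
  destruct (excluded_middle_informative (Bset sg (x,y))) as [c|_].
  { exfalso; apply (notBD x y); auto. }
  destruct (excluded_middle_informative (Cset sgi (x,y))) as [c|_].
  { exfalso; apply (notCD x y); auto. }
  destruct (excluded_middle_informative (Dset sg (x,y))) as [_|c]; [|contradiction].
  pose proof HD as HD'. rewrite D_t in HD'.
  assert (Ht : sg x <> 0) by (destruct (sgneq0 x); auto).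
  set (t := sg x) in *.
  destruct (iu_spec (vmap sg) (Cset sgi) (x,y)) as [n [[HC Hmin] E]].
  { destruct (E1 t (-y)) as [n Hn]; try tauto. destruct HD'; nra.
    exists n. rewrite iter_vmap, C_t. fold t. destruct Hn; split; [nra|lra]. }
  exists n. rewrite iter_vmap in HC. split; [exact E|]. split; [exact HC|].
  destruct n as [|n].
  - exfalso. simpl in HC. apply (notCD x y); auto. replace y with (y + 0 * t) by ring. auto.
  - rewrite C_t in HC. fold t in HC.
    replace (y + INR (S n) * t) with (- (-y - INR (S n) * t)) by ring.
    rewrite Rabs_Ropp. rewrite <- (Rabs_Ropp y).
    apply Bnd1. tauto. destruct HD'; nra. apply INR_ge1.
    destruct HC. nra.
Qed.


Lemma word_app (f g : pt -> pt) w1 w2 q :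
  apply_word f g (w1 ++ w2) q = apply_word f g w1 (apply_word f g w2 q).
Proof. unfold apply_word. apply fold_right_app. Qed.
Lemma word_true (f g : pt -> pt) n q : apply_word f g (repeat true n) q = Nat.iter n f q.
Proof. induction n; simpl; auto. rewrite <- IHn. reflexivity. Qed.
Lemma word_false (f g : pt -> pt) n q : apply_word f g (repeat false n) q = Nat.iter n g q.
Proof. induction n; simpl; auto. rewrite <- IHn. reflexivity. Qed.

Definition goodAB p := forall w q, Ox q -> p <> apply_word (hmap sgi) (vmap sg) w q.
Definition goodCD p := forall w q, Oy q -> p <> apply_word (hinv sgi) (vinv sg) w q.

Lemma good_step (f g : pt -> pt) (P : pt -> Prop) p p' w0 :
  p = apply_word f g w0 p' -> (forall w q, P q -> p <> apply_word f g w q) ->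
  (forall w q, P q -> p' <> apply_word f g w q).
Proof.
  intros E H w q Pq E'. apply (H (w0 ++ w) q Pq). rewrite word_app, <- E', E. reflexivity.
Qed.

Lemma goodAB_y x y : goodAB (x,y) -> y <> 0.
Proof. intros H Hy. apply (H nil (x,y)); auto. Qed.
Lemma goodCD_x x y : goodCD (x,y) -> x <> 0.
Proof. intros H Hx. apply (H nil (x,y)); auto. Qed.

Lemma U_AB x y : (Aset sgi (x,y) \/ Bset sg (x,y)) -> goodAB (x,y) ->
  exists x' y', Usigma sg sgi (x,y) = (x',y') /\ (Aset sgi (x',y') \/ Bset sg (x',y')) /\
    goodAB (x',y') /\ norm1 (x',y') <= / 2 * norm1 (x,y).
Proof.
  intros [HA|HB] Hg.
  - destruct (stepA x y HA (goodAB_y _ _ Hg)) as [n1 [E1' [HB1 Hb1]]].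
    rewrite iter_hinv in E1'.
    set (x1 := x - INR n1 * sgi y) in *.
    assert (Hg1 : goodAB (x1,y)).
    { refine (good_step _ _ _ (x,y) (x1,y) (repeat true n1) _ Hg).
      rewrite word_true. unfold x1. rewrite iter_hmap. f_equal; ring. }
    destruct (stepB x1 y HB1) as [n2 [E2' [HA2 Hb2]]].
    rewrite iter_vinv in E2'.
    set (y2 := y - INR n2 * sg x1) in *.
    exists x1, y2. unfold Usigma. rewrite E1', E2'. split; auto. split; auto. split.
    + refine (good_step _ _ _ (x1,y) (x1,y2) (repeat false n2) _ Hg1).
      rewrite word_false. unfold y2. rewrite iter_vmap. f_equal; ring.
    + unfold norm1; simpl. lra.
  - destruct (stepB x y HB) as [n1 [E1' [HA1 Hb1]]].
    rewrite iter_vinv in E1'.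
    set (y1 := y - INR n1 * sg x) in *.
    assert (Hg1 : goodAB (x,y1)).
    { refine (good_step _ _ _ (x,y) (x,y1) (repeat false n1) _ Hg).
      rewrite word_false. unfold y1. rewrite iter_vmap. f_equal; ring. }
    destruct (stepA x y1 HA1 (goodAB_y _ _ Hg1)) as [n2 [E2' [HB2 Hb2]]].
    rewrite iter_hinv in E2'.
    set (x2 := x - INR n2 * sgi y1) in *.
    exists x2, y1. unfold Usigma. rewrite E1', E2'. split; auto. split; auto. split.
    + refine (good_step _ _ _ (x,y1) (x2,y1) (repeat true n2) _ Hg1).
      rewrite word_true. unfold x2. rewrite iter_hmap. f_equal; ring.
    + unfold norm1; simpl. lra.
Qed.

Lemma U_CD x y : (Cset sgi (x,y) \/ Dset sg (x,y)) -> goodCD (x,y) ->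
  exists x' y', Usigma sg sgi (x,y) = (x',y') /\ (Cset sgi (x',y') \/ Dset sg (x',y')) /\
    goodCD (x',y') /\ norm1 (x',y') <= / 2 * norm1 (x,y).
Proof.
  intros [HC|HD] Hg.
  - destruct (stepC x y HC) as [n1 [E1' [HD1 Hb1]]].
    rewrite iter_hmap in E1'.
    set (x1 := x + INR n1 * sgi y) in *.
    assert (Hg1 : goodCD (x1,y)).
    { refine (good_step _ _ _ (x,y) (x1,y) (repeat true n1) _ Hg).
      rewrite word_true. unfold x1. rewrite iter_hinv. f_equal; ring. }
    destruct (stepD x1 y HD1 (goodCD_x _ _ Hg1)) as [n2 [E2' [HC2 Hb2]]].
    rewrite iter_vmap in E2'.
    set (y2 := y + INR n2 * sg x1) in *.
    exists x1, y2. unfold Usigma. rewrite E1', E2'. split; auto. split; auto. split.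
    + refine (good_step _ _ _ (x1,y) (x1,y2) (repeat false n2) _ Hg1).
      rewrite word_false. unfold y2. rewrite iter_vinv. f_equal; ring.
    + unfold norm1; simpl. lra.
  - destruct (stepD x y HD (goodCD_x _ _ Hg)) as [n1 [E1' [HC1 Hb1]]].
    rewrite iter_vmap in E1'.
    set (y1 := y + INR n1 * sg x) in *.
    assert (Hg1 : goodCD (x,y1)).
    { refine (good_step _ _ _ (x,y) (x,y1) (repeat false n1) _ Hg).
      rewrite word_false. unfold y1. rewrite iter_vinv. f_equal; ring. }
    destruct (stepC x y1 HC1) as [n2 [E2' [HD2 Hb2]]].
    rewrite iter_hmap in E2'.
    set (x2 := x + INR n2 * sgi y1) in *.
    exists x2, y1. unfold Usigma. rewrite E1', E2'. split; auto. split; auto. split.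
    + refine (good_step _ _ _ (x,y1) (x2,y1) (repeat true n2) _ Hg1).
      rewrite word_true. unfold x2. rewrite iter_hinv. f_equal; ring.
    + unfold norm1; simpl. lra.
Qed.

Lemma main_aux p : Omega p -> sigma_irrational sg sgi p ->
  forall n, ((Aset sgi (Nat.iter n (Usigma sg sgi) p) \/ Bset sg (Nat.iter n (Usigma sg sgi) p))
              /\ goodAB (Nat.iter n (Usigma sg sgi) p) \/
             (Cset sgi (Nat.iter n (Usigma sg sgi) p) \/ Dset sg (Nat.iter n (Usigma sg sgi) p))
              /\ goodCD (Nat.iter n (Usigma sg sgi) p)) /\
     norm1 (Nat.iter n (Usigma sg sgi) p) <= (/ 2) ^ n * norm1 p.
Proof.
  intros Hom Hirr.
  assert (HgA : goodAB p).
  { intros w q Oq E. apply Hirr. right; right; left. exists w, q. auto. }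
  assert (HgC : goodCD p).
  { intros w q Oq E. apply Hirr. right; right; right. exists w, q. auto. }
  induction n.
  - simpl. split; [|lra]. destruct p as [x y].
    destruct (cover x y Hom) as [h|[h|[h|h]]]; tauto.
  - destruct IHn as [Hinv Hn]. rewrite Nat.iter_succ.
    destruct (Nat.iter n (Usigma sg sgi) p) as [x y] eqn:Eq.
    destruct Hinv as [[H1 H2]|[H1 H2]].
    + destruct (U_AB x y H1 H2) as [x' [y' [E [h1 [h2 h3]]]]]. rewrite E.
      split; [tauto|]. simpl pow. pose proof (Rabs_pos x). unfold norm1 in *; simpl in *. nra.
    + destruct (U_CD x y H1 H2) as [x' [y' [E [h1 [h2 h3]]]]]. rewrite E.
      split; [tauto|]. simpl pow. unfold norm1 in *; simpl in *. nra.
Qed.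

End P.

Theorem lemma3 (sigma sigmainv : R -> R) (Hs : inc_odd_homeo sigma sigmainv)
  (p : pt) (Hp : Omega p) (Hirr : sigma_irrational sigma sigmainv p) :
  forall n : nat,
    norm1 (Nat.iter n (Usigma sigma sigmainv) p) <= (/ 2) ^ n * norm1 p.
Proof.
  destruct Hs as [H1 [H2 [H3 [H4 _]]]].
  intros n. exact (proj2 (main_aux sigma sigmainv H1 H2 H3 H4 p Hp Hirr n)).
Qed.
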